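(* Let $\mathcal{P}_*$ be the nonempty powerset monad on $\mathbf{Sets}$, and let $\mathcal{K}\ell(\mathcal{P}_* )_{+1}$ be the category whose objects are sets and whose morphisms $X\to Y$ are functions $f\colon X\to\mathcal{P}_*(Y+1)$, with composition $(g\odot f)(x)=\bigcup_{y\in f(x)\cap Y} g(y)\,\cup\,\{*\mid *\in f(x)\}$ for $g\colon Y\to\mathcal{P}_*(Z+1)$. Define $\square\colon\mathcal{K}\ell(\mathcal{P}_* )_{+1}\to\mathbf{PoSets}^{\mathrm{op}}$ by $\square(X)=\mathcal{P}(X)$ (ordered by inclusion) and, for $f\colon X\to\mathcal{P}_*(Y+1)$ and $Q\subseteq Y$, $\square(f)(Q)=\{x\in X\mid \forall y\in Y.\ y\in f(x)\Rightarrow y\in Q\}$. Then the forgetful functor $U\colon\int\square\to\mathcal{K}\ell(\mathcal{P}_* )_{+1}$ has a left adjoint $0$ with $0(X)=(X,\emptyset)$ and a right adjoint $1$ with $1(X)=(X,X)$; moreover there is a functor (comprehension) $\int\square\to\mathcal{K}\ell(\mathcal{P}_* )_{+1}$ with $(X,P)\mapsto P$ which is right adjoint to $1$, and a functor (quotient) with $(X,P)\mapsto\neg P=X\setminus P$ which is left adjoint to $0$.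
   Context: $Y+1=Y\sqcup\{*\}$. For a functor $F\colon\mathcal{B}\to\mathbf{PoSets}^{\mathrm{op}}$, $\int F$ is the category with objects $(X,P)$, $P\in F(X)$, and morphisms $f\colon(X,P)\to(Y,Q)$ the morphisms $f\colon X\to Y$ of $\mathcal{B}$ with $P\le F(f)(Q)$; the forgetful functor sends $(X,P)\mapsto X$, $f\mapsto f$; $0$ and $1$ act as identity on morphisms. *)

(* Defs.v *)
(* Sets are Types, subsets are predicates [X -> Prop],
   Y+1 is [option Y] with [None] playing the role of the extra point [*]. *)
From Stdlib Require Import ProofIrrelevance.

Record Cat := {
  ob : Type;
  hom : ob -> ob -> Type;
  cid : forall a, hom a a;
  ccomp : forall a b c, hom b c -> hom a b -> hom a c
}.
Arguments cid {C} a : rename.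
Arguments ccomp {C a b c} g f : rename.

Record Functor (C D : Cat) := {
  fob : ob C -> ob D;
  fmap : forall a b, hom C a b -> hom D (fob a) (fob b);
  fmap_id : forall a, fmap a a (cid a) = cid (fob a);
  fmap_comp : forall a b c (g : hom C b c) (f : hom C a b),
      fmap a c (ccomp g f) = ccomp (fmap b c g) (fmap a b f)
}.
Arguments fob {C D} F a : rename.
Arguments fmap {C D} F {a b} f : rename.

Definition Adjunction {C D : Cat} (F : Functor C D) (G : Functor D C) : Prop :=
  exists (phi : forall c d, hom D (fob F c) d -> hom C c (fob G d))
         (psi : forall c d, hom C c (fob G d) -> hom D (fob F c) d),
    (forall c d f, psi c d (phi c d f) = f) /\
    (forall c d g, phi c d (psi c d g) = g) /\
    (forall c c' d d' (h : hom C c' c) (k : hom D d d') (f : hom D (fob F c) d),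
        phi c' d' (ccomp k (ccomp f (fmap F h))) = ccomp (fmap G k) (ccomp (phi c d f) h)).

(* A morphism X -> Y is f : X -> nonempty subsets of Y+1: a relation X -> option Y -> Prop
   such that every f(x) is nonempty. *)
Definition KlHom (X Y : Type) : Type :=
  { f : X -> option Y -> Prop | forall x, exists u, f x u }.

Definition kl_id (X : Type) : KlHom X X :=
  exist _ (fun x u => u = Some x) (fun x => ex_intro _ (Some x) eq_refl).

Definition kl_comp_rel {X Y Z : Type} (g : KlHom Y Z) (f : KlHom X Y) :
  X -> option Z -> Prop :=
  fun x w => (exists y, proj1_sig f x (Some y) /\ proj1_sig g y w)
             \/ (w = None /\ proj1_sig f x None).

Lemma kl_comp_ne {X Y Z : Type} (g : KlHom Y Z) (f : KlHom X Y) :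
  forall x, exists w, kl_comp_rel g f x w.
Proof.
  intro x. destruct (proj2_sig f x) as [[y|] H].
  - destruct (proj2_sig g y) as [w Hw]. exists w. left. eauto.
  - exists None. right. auto.
Qed.

Definition kl_comp {X Y Z : Type} (g : KlHom Y Z) (f : KlHom X Y) : KlHom X Z :=
  exist _ (kl_comp_rel g f) (kl_comp_ne g f).

Definition KlCat : Cat :=
  {| ob := Type; hom := KlHom; cid := kl_id; ccomp := @kl_comp |}.

Definition box {X Y : Type} (f : KlHom X Y) (Q : Y -> Prop) : X -> Prop :=
  fun x => forall y, proj1_sig f x (Some y) -> Q y.

Record IntOb := { carrier : Type; pred : carrier -> Prop }.

Definition IntHom (A B : IntOb) : Type :=
  { f : KlHom (carrier A) (carrier B) | forall x, pred A x -> box f (pred B) x }.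

Lemma int_id_ok (A : IntOb) : forall x, pred A x -> box (kl_id (carrier A)) (pred A) x.
Proof. intros x Hx y Hy. simpl in Hy. injection Hy as ->. exact Hx. Qed.

Definition int_id (A : IntOb) : IntHom A A := exist _ (kl_id (carrier A)) (int_id_ok A).

Lemma int_comp_ok {A B C : IntOb} (g : IntHom B C) (f : IntHom A B) :
  forall x, pred A x -> box (kl_comp (proj1_sig g) (proj1_sig f)) (pred C) x.
Proof.
  intros x Hx z [[y [Hfy Hgy]] | [Hn _]].
  - exact (proj2_sig g y (proj2_sig f x Hx y Hfy) z Hgy).
  - discriminate Hn.
Qed.

Definition int_comp {A B C : IntOb} (g : IntHom B C) (f : IntHom A B) : IntHom A C :=
  exist _ (kl_comp (proj1_sig g) (proj1_sig f)) (int_comp_ok g f).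

Definition IntCat : Cat :=
  {| ob := IntOb; hom := IntHom; cid := int_id; ccomp := @int_comp |}.

Definition UFun : Functor IntCat KlCat :=
  {| fob := fun A : ob IntCat => (carrier A : ob KlCat);
     fmap := fun A B (f : hom IntCat A B) => (proj1_sig f : hom KlCat (carrier A) (carrier B));
     fmap_id := fun _ => eq_refl;
     fmap_comp := fun _ _ _ _ _ => eq_refl |}.

Lemma int_hom_eq {A B : IntOb} (f g : IntHom A B) : proj1_sig f = proj1_sig g -> f = g.
Proof. intro H. apply eq_sig_hprop; [intros; apply proof_irrelevance | exact H]. Qed.

Definition zero_ob (X : ob KlCat) : ob IntCat := {| carrier := X; pred := fun _ => False |}.
Definition zero_map (X Y : ob KlCat) (f : hom KlCat X Y) : hom IntCat (zero_ob X) (zero_ob Y) :=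
  exist _ f (fun x (Hx : False) => False_rect _ Hx).
Definition ZeroFun : Functor KlCat IntCat :=
  {| fob := zero_ob; fmap := zero_map;
     fmap_id := fun X => int_hom_eq (zero_map X X (cid X)) (cid (zero_ob X)) eq_refl;
     fmap_comp := fun X Y Z g f => int_hom_eq (zero_map X Z (ccomp g f)) (ccomp (zero_map Y Z g) (zero_map X Y f)) eq_refl |}.

Definition one_ob (X : ob KlCat) : ob IntCat := {| carrier := X; pred := fun _ => True |}.
Definition one_map (X Y : ob KlCat) (f : hom KlCat X Y) : hom IntCat (one_ob X) (one_ob Y) :=
  exist _ f (fun x _ y _ => I).
Definition OneFun : Functor KlCat IntCat :=
  {| fob := one_ob; fmap := one_map;
     fmap_id := fun X => int_hom_eq (one_map X X (cid X)) (cid (one_ob X)) eq_refl;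
     fmap_comp := fun X Y Z g f => int_hom_eq (one_map X Z (ccomp g f)) (ccomp (one_map Y Z g) (one_map X Y f)) eq_refl |}.

(* Main.v *)
Require Import Defs.
From Stdlib Require Import ProofIrrelevance FunctionalExtensionality PropExtensionality Classical.
Lemma kl_eq {X Y : Type} (f g : KlHom X Y) :
  (forall x u, proj1_sig f x u <-> proj1_sig g x u) -> f = g.
Proof.
  intro H. apply eq_sig_hprop; [intros; apply proof_irrelevance|].
  apply functional_extensionality; intro x; apply functional_extensionality; intro u.
  apply propositional_extensionality, H.
Qed.

Definition sub_ob (A : IntOb) : Type := { x : carrier A | pred A x }.

Definition cmp_rel {A B : IntOb} (f : IntHom A B) : sub_ob A -> option (sub_ob B) -> Prop :=
  fun x w => match w with
             | Some y => proj1_sig (proj1_sig f) (proj1_sig x) (Some (proj1_sig y))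
             | None => proj1_sig (proj1_sig f) (proj1_sig x) None
             end.

Lemma cmp_ne {A B : IntOb} (f : IntHom A B) : forall x, exists w, cmp_rel f x w.
Proof.
  intros [x Hx]. destruct (proj2_sig (proj1_sig f) x) as [[y|] Hy].
  - exists (Some (exist _ y (proj2_sig f x Hx y Hy))). exact Hy.
  - exists None. exact Hy.
Qed.

Definition cmp_map (A B : IntOb) (f : IntHom A B) : KlHom (sub_ob A) (sub_ob B) :=
  exist _ (cmp_rel f) (cmp_ne f).

Lemma sig_eq {T} {P : T -> Prop} (a b : {x | P x}) : proj1_sig a = proj1_sig b -> a = b.
Proof. intro H. apply eq_sig_hprop; [intros; apply proof_irrelevance| exact H]. Qed.

Lemma cmp_id (A : IntOb) : cmp_map A A (int_id A) = kl_id (sub_ob A).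
Proof.
  apply kl_eq. intros x [y|]; simpl; split; intro H; try discriminate.
  - injection H as H. apply sig_eq in H. subst. reflexivity.
  - injection H as H. subst. reflexivity.
Qed.

Lemma cmp_comp (A B C : IntOb) (g : IntHom B C) (f : IntHom A B) :
  cmp_map A C (int_comp g f) = kl_comp (cmp_map B C g) (cmp_map A B f).
Proof.
  apply kl_eq. intros [x Hx] [z|]; simpl; unfold kl_comp_rel; simpl; split.
  - intros [[y [H1 H2]]|[H _]]; [|discriminate].
    left. exists (exist _ y (proj2_sig f x Hx y H1)). simpl. auto.
  - intros [[[y Hy] [H1 H2]]|[H _]]; [|discriminate]. left. exists y. auto.
  - intros [[y [H1 H2]]|[_ H]].
    + left. exists (exist _ y (proj2_sig f x Hx y H1)). simpl. auto.
    + right. auto.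
  - intros [[[y Hy] [H1 H2]]|[_ H]].
    + left. exists y. auto.
    + right. auto.
Qed.

Definition CmpFun : Functor IntCat KlCat :=
  {| fob := (sub_ob : ob IntCat -> ob KlCat); fmap := cmp_map;
     fmap_id := cmp_id; fmap_comp := cmp_comp |}.

Definition quo_ob (A : IntOb) : Type := { x : carrier A | ~ pred A x }.

Definition quo_rel {A B : IntOb} (f : IntHom A B) : quo_ob A -> option (quo_ob B) -> Prop :=
  fun x w => match w with
             | Some y => proj1_sig (proj1_sig f) (proj1_sig x) (Some (proj1_sig y))
             | None => proj1_sig (proj1_sig f) (proj1_sig x) None \/
                       exists y, pred B y /\ proj1_sig (proj1_sig f) (proj1_sig x) (Some y)
             end.

Lemma quo_ne {A B : IntOb} (f : IntHom A B) : forall x, exists w, quo_rel f x w.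
Proof.
  intros [x Hx]. destruct (proj2_sig (proj1_sig f) x) as [[y|] Hy].
  - destruct (classic (pred B y)) as [Q|Q].
    + exists None. right. exists y. auto.
    + exists (Some (exist _ y Q)). exact Hy.
  - exists None. left. exact Hy.
Qed.

Definition quo_map (A B : IntOb) (f : IntHom A B) : KlHom (quo_ob A) (quo_ob B) :=
  exist _ (quo_rel f) (quo_ne f).

Lemma quo_id (A : IntOb) : quo_map A A (int_id A) = kl_id (quo_ob A).
Proof.
  apply kl_eq. intros x [y|]; simpl; split; intro H; try discriminate.
  - injection H as H. apply sig_eq in H. subst. reflexivity.
  - injection H as H. subst. reflexivity.
  - destruct H as [H|[y [Hy H]]]; [discriminate|]. injection H as H. subst.
    destruct x as [x Hx]. contradiction.
Qed.

Lemma quo_comp (A B C : IntOb) (g : IntHom B C) (f : IntHom A B) :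
  quo_map A C (int_comp g f) = kl_comp (quo_map B C g) (quo_map A B f).
Proof.
  apply kl_eq. intros [x Hx] [z|]; simpl; unfold kl_comp_rel; simpl; split.
  - intros [[y [H1 H2]]|[H _]]; [|discriminate].
    destruct (classic (pred B y)) as [Q|Q].
    + exfalso. exact (proj2_sig z (proj2_sig g y Q _ H2)).
    + left. exists (exist _ y Q). simpl. auto.
  - intros [[[y Hy] [H1 H2]]|[H _]]; [|discriminate]. left. exists y. auto.
  - intros [[[y [H1 H2]]|[_ H]] | [z [Rz [[y [H1 H2]]|[Hn _]]]]]; try discriminate.
    + destruct (classic (pred B y)) as [Q|Q].
      * right. split; [reflexivity|]. right. exists y. auto.
      * left. exists (exist _ y Q). simpl. split; [auto|]. left. auto.
    + right. split; [reflexivity|]. left. auto.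
    + destruct (classic (pred B y)) as [Q|Q].
      * right. split; [reflexivity|]. right. exists y. auto.
      * left. exists (exist _ y Q). simpl. split; [auto|]. right. exists z. auto.
  - intros [[[y Hy] [H1 [H2|[z [Rz H2]]]]]|[_ [H|[y [Q H]]]]].
    + left. left. exists y. auto.
    + right. exists z. split; [auto|]. left. exists y. auto.
    + left. right. auto.
    + destruct (proj2_sig (proj1_sig g) y) as [[z|] Hz].
      * right. exists z. split; [exact (proj2_sig g y Q z Hz)|]. left. exists y. auto.
      * left. left. exists y. auto.
Qed.

Definition QuoFun : Functor IntCat KlCat :=
  {| fob := (quo_ob : ob IntCat -> ob KlCat); fmap := quo_map;
     fmap_id := quo_id; fmap_comp := quo_comp |}.

Definition phi3_rel {c : Type} {d : IntOb} (f : IntHom (one_ob c) d) : c -> option (sub_ob d) -> Prop :=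
  fun x w => match w with Some y => proj1_sig (proj1_sig f) x (Some (proj1_sig y))
                        | None => proj1_sig (proj1_sig f) x None end.
Lemma phi3_ne {c : Type} {d : IntOb} (f : IntHom (one_ob c) d) : forall x, exists w, phi3_rel f x w.
Proof.
  intros x. destruct (proj2_sig (proj1_sig f) x) as [[y|] Hy].
  - exists (Some (exist _ y (proj2_sig f x I y Hy))). exact Hy.
  - exists None. exact Hy.
Qed.
Definition phi3 (c : ob KlCat) (d : ob IntCat) (f : hom IntCat (fob OneFun c) d)
  : hom KlCat c (fob CmpFun d) := exist _ (phi3_rel f) (phi3_ne f).

Definition psi3_rel {c : Type} {d : IntOb} (g : KlHom c (sub_ob d)) : c -> option (carrier d) -> Prop :=
  fun x u => match u with Some y => exists q, proj1_sig g x (Some (exist _ y q))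
                        | None => proj1_sig g x None end.
Lemma psi3_ne {c : Type} {d : IntOb} (g : KlHom c (sub_ob d)) : forall x, exists u, psi3_rel g x u.
Proof.
  intros x. destruct (proj2_sig g x) as [[[y q]|] Hy].
  - exists (Some y). exists q. exact Hy.
  - exists None. exact Hy.
Qed.
Lemma psi3_ok {c : Type} {d : IntOb} (g : KlHom c (sub_ob d)) :
  forall x, pred (one_ob c) x -> box (exist _ (psi3_rel g) (psi3_ne g)) (pred d) x.
Proof. intros x _ y [q _]. exact q. Qed.
Definition psi3 (c : ob KlCat) (d : ob IntCat) (g : hom KlCat c (fob CmpFun d))
  : hom IntCat (fob OneFun c) d := exist _ (exist _ (psi3_rel g) (psi3_ne g)) (psi3_ok g).

Lemma adj3 : Adjunction OneFun CmpFun.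
Proof.
  exists phi3, psi3. split; [|split].
  - intros c d f. apply int_hom_eq, kl_eq. intros x [y|]; simpl; split.
    + intros [q H]. exact H.
    + intro H. exists (proj2_sig f x I y H). exact H.
    + auto.
    + auto.
  - intros c d g. apply kl_eq. intros x [[y q]|]; simpl; split.
    + intros [q' H]. rewrite (proof_irrelevance _ q q'). exact H.
    + intro H. exists q. exact H.
    + auto.
    + auto.
  - intros c c' d d' h k f. apply kl_eq. intros x [[z r]|]; simpl; unfold kl_comp_rel; simpl.
    + split.
      * intros [[y [[[w [H1 H2]]|[Hn _]] H3]]|[Hn _]]; try discriminate.
        left. exists (exist _ y (proj2_sig f w I y H2)). simpl. split; [|exact H3].
        left. exists w. auto.
      * intros [[[y q] [[[w [H1 H2]]|[Hn _]] H3]]|[Hn _]]; try discriminate.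
        left. exists y. split; [|exact H3]. left. exists w. auto.
    + split.
      * intros [[y [[[w [H1 H2]]|[Hn _]] H3]]|[_ [[w [H1 H2]]|[_ H1]]]]; try discriminate.
        -- left. exists (exist _ y (proj2_sig f w I y H2)). simpl. split; [|exact H3].
           left. exists w. auto.
        -- right. split; [reflexivity|]. left. exists w. auto.
        -- right. split; [reflexivity|]. right. auto.
      * intros [[[y q] [[[w [H1 H2]]|[Hn _]] H3]]|[_ [[w [H1 H2]]|[_ H1]]]]; try discriminate.
        -- left. exists y. split; [|exact H3]. left. exists w. auto.
        -- right. split; [reflexivity|]. left. exists w. auto.
        -- right. split; [reflexivity|]. right. auto.
Qed.

Definition phi5_rel {c : IntOb} {d : Type} (f : KlHom (quo_ob c) d) : carrier c -> option d -> Prop :=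
  fun x u => (pred c x /\ u = None) \/ exists hx, proj1_sig f (exist _ x hx) u.
Lemma phi5_ne {c : IntOb} {d : Type} (f : KlHom (quo_ob c) d) : forall x, exists u, phi5_rel f x u.
Proof.
  intro x. destruct (classic (pred c x)) as [P|P].
  - exists None. left. auto.
  - destruct (proj2_sig f (exist _ x P)) as [u Hu]. exists u. right. exists P. exact Hu.
Qed.
Lemma phi5_ok {c : IntOb} {d : Type} (f : KlHom (quo_ob c) d) :
  forall x, pred c x -> box (exist _ (phi5_rel f) (phi5_ne f)) (pred (zero_ob d)) x.
Proof. intros x P y [[_ H]|[hx _]]; [discriminate|contradiction]. Qed.
Definition phi5 (c : ob IntCat) (d : ob KlCat) (f : hom KlCat (fob QuoFun c) d)
  : hom IntCat c (fob ZeroFun d) := exist _ (exist _ (phi5_rel f) (phi5_ne f)) (phi5_ok f).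

Definition psi5_rel {c : IntOb} {d : Type} (g : IntHom c (zero_ob d)) : quo_ob c -> option d -> Prop :=
  fun x u => proj1_sig (proj1_sig g) (proj1_sig x) u.
Lemma psi5_ne {c : IntOb} {d : Type} (g : IntHom c (zero_ob d)) : forall x, exists u, psi5_rel g x u.
Proof. intro x. exact (proj2_sig (proj1_sig g) (proj1_sig x)). Qed.
Definition psi5 (c : ob IntCat) (d : ob KlCat) (g : hom IntCat c (fob ZeroFun d))
  : hom KlCat (fob QuoFun c) d := exist _ (psi5_rel g) (psi5_ne g).

Lemma adj5 : Adjunction QuoFun ZeroFun.
Proof.
  exists phi5, psi5. split; [|split].
  - intros c d f. apply kl_eq. intros [x hx] u; simpl; unfold psi5_rel, phi5_rel; simpl. split.
    + intros [[P _]|[hx' H]]; [contradiction|]. rewrite (proof_irrelevance _ hx hx'). exact H.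
    + intro H. right. exists hx. exact H.
  - intros c d g. apply int_hom_eq, kl_eq. intros x u; simpl; unfold psi5_rel, phi5_rel; simpl. split.
    + intros [[P E]|[hx H]]; [|exact H]. subst u.
      destruct (proj2_sig (proj1_sig g) x) as [[y|] Hy]; [|exact Hy].
      exfalso. exact (proj2_sig g x P y Hy).
    + intro H. destruct (classic (pred c x)) as [P|P].
      * left. split; [exact P|]. destruct u as [y|]; [|reflexivity].
        exfalso. exact (proj2_sig g x P y H).
      * right. exists P. exact H.
  - intros c c' d d' h k f. apply int_hom_eq, kl_eq. intros x u; simpl;
      unfold phi5_rel, kl_comp_rel; simpl. split.
    + intros [[P' E]|[hx [[y [[[y' [H1 H2]]|[Hn _]] H3]]|[E [[y' [H1 H2]]|[_ [H1|[y [Py H1]]]]]]]]];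
        try discriminate.
      * subst u. right. split; [reflexivity|].
        destruct (proj2_sig (proj1_sig h) x) as [[y0|] Hy0].
        -- left. exists y0. split; [exact Hy0|]. left. split; [exact (proj2_sig h x P' y0 Hy0)|reflexivity].
        -- right. auto.
      * left. exists y. split; [|exact H3]. left. destruct y' as [y' hy']. exists y'.
        split; [exact H1|]. right. exists hy'. exact H2.
      * subst u. right. split; [reflexivity|]. left. destruct y' as [y' hy']. exists y'.
        split; [exact H1|]. right. exists hy'. exact H2.
      * subst u. right. split; [reflexivity|]. right. auto.
      * subst u. right. split; [reflexivity|]. left. exists y. split; [exact H1|]. left. auto.
    + intro H. destruct (classic (pred c' x)) as [P'|hx].
      * left. split; [exact P'|].
        destruct H as [[y [[[y0 [H1 [[_ E]|[hy _]]]]|[E _]] _]]|[E _]]; try discriminate; [|exact E].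
        exfalso. exact (hy (proj2_sig h x P' y0 H1)).
      * right. exists hx.
        destruct H as [[y [[[y0 [H1 [[_ E]|[hy H2]]]]|[E _]] H3]]|[E [[y0 [H1 [[Py _]|[hy H2]]]]|[_ H1]]]];
          try discriminate.
        -- left. exists y. split; [|exact H3]. left. exists (exist _ y0 hy). auto.
        -- right. split; [exact E|]. right. split; [reflexivity|]. right. exists y0. auto.
        -- right. split; [exact E|]. left. exists (exist _ y0 hy). auto.
        -- right. split; [exact E|]. right. split; [reflexivity|]. left. exact H1.
Qed.
Lemma int_eq {A B : IntOb} (f g : IntHom A B) :
  (forall x u, proj1_sig (proj1_sig f) x u <-> proj1_sig (proj1_sig g) x u) -> f = g.
Proof. intro H. apply int_hom_eq, kl_eq, H. Qed.

Lemma adj1 : Adjunction ZeroFun UFun.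
Proof.
  exists (fun c d (f : hom IntCat (fob ZeroFun c) d) => (proj1_sig f : hom KlCat c (fob UFun d))).
  exists (fun c d (g : hom KlCat c (fob UFun d)) =>
            (exist _ g (fun x (Hx : False) => False_rect _ Hx) : hom IntCat (fob ZeroFun c) d)).
  split; [|split].
  - intros c d f. apply int_hom_eq. reflexivity.
  - intros c d g. reflexivity.
  - intros. reflexivity.
Qed.

Lemma adj2 : Adjunction UFun OneFun.
Proof.
  exists (fun c d (f : hom KlCat (fob UFun c) d) =>
            (exist _ f (fun x _ y _ => I) : hom IntCat c (fob OneFun d))).
  exists (fun c d (g : hom IntCat c (fob OneFun d)) => (proj1_sig g : hom KlCat (fob UFun c) d)).
  split; [|split].
  - intros c d f. reflexivity.
  - intros c d g. apply int_hom_eq. reflexivity.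
  - intros. apply int_hom_eq. reflexivity.
Qed.

Theorem proposition3p3 :
  Adjunction ZeroFun UFun /\
  Adjunction UFun OneFun /\
  (exists Cmp : Functor IntCat KlCat,
      (forall A : ob IntCat, fob Cmp A = ({ x : carrier A | pred A x } : ob KlCat)) /\
      Adjunction OneFun Cmp) /\
  (exists Quo : Functor IntCat KlCat,
      (forall A : ob IntCat, fob Quo A = ({ x : carrier A | ~ pred A x } : ob KlCat)) /\
      Adjunction Quo ZeroFun).
Proof.
  split; [exact adj1|]. split; [exact adj2|]. split.
  - exists CmpFun. split; [reflexivity|exact adj3].
  - exists QuoFun. split; [reflexivity|exact adj5].
Qed.
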